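(* Let $\mathbb F$ be a field of characteristic $2$, let $m\ge1$, and let $\mathfrak h_m$ be the Heisenberg Lie algebra over $\mathbb F$ with basis $e_1,\dots,e_{2m+1}$ and only nonzero brackets $[e_i,e_{m+i}]=-[e_{m+i},e_i]=e_{2m+1}$ for $1\le i\le m$. For $\lambda=(\lambda_1,\dots,\lambda_{2m+1})\in\mathbb F^{2m+1}$ let $\mathfrak h_m^\lambda(2)$ denote $\mathfrak h_m$ with the restricted structure given by the $[2]$-operator $$\left(\sum_{i=1}^{2m+1}a_ie_i\right)^{[2]}=\left(\sum_{i=1}^{2m+1}a_i^2\lambda_i+\sum_{j=1}^{m}a_ja_{m+j}\right)e_{2m+1}$$ (i.e. the unique $[2]$-operator with $e_i^{[2]}=\lambda_ie_{2m+1}$). Let $\lambda,\lambda'\in\mathbb F^{2m+1}$. Then $\mathfrak h_m^\lambda(2)$ and $\mathfrak h_m^{\lambda'}(2)$ are isomorphic as restricted Lie algebras if and only if there exist an invertible matrix $A\in\mathbb F^{2m\times2m}$, a vector $k=(k_1,\dots,k_{2m})\in\mathbb F^{2m}$ and a scalar $\mu\in\mathbb F$ with $(\det A)^2=\mu^{2m}$ such that (1) $A\begin{pmatrix}0&I_m\\-I_m&0\end{pmatrix}A^{t}=\mu\begin{pmatrix}0&I_m\\-I_m&0\end{pmatrix}$; (2') for every row vector $a=(a_1,\dots,a_{2m})\in\mathbb F^{2m}$, $$\mu\, a\Big(\sum_{i=1}^{2m}\lambda_iE_{ii}\Big)a^{T}+\mu\, a_{\mathrm I}a_{\mathrm{II}}^{T}=aA\Big(\sum_{i=1}^{2m}\lambda'_iE_{ii}\Big)(aA)^{T}+(aA)_{\mathrm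 I}(aA)_{\mathrm{II}}^{T}+\lambda'_{2m+1}(ak^{T})^2;$$ (3) $\lambda_{2m+1}=\mu\,\lambda'_{2m+1}$.
   Context: For $a=(a_1,\dots,a_{2m})\in\mathbb F^{2m}$, $a_{\mathrm I}=(a_1,\dots,a_m)$ and $a_{\mathrm{II}}=(a_{m+1},\dots,a_{2m})$. $E_{ii}$ is the $2m\times2m$ matrix with a single nonzero entry $1$ in position $(i,i)$. $I_m$ is the $m\times m$ identity matrix, and $^t$, $^T$ denote transpose. A restricted Lie algebra isomorphism is a Lie algebra isomorphism $\Psi$ with $\Psi(g^{[2]})=\Psi(g)^{[2]'}$ for all $g$. *)

(* Defs.v *)
From HB Require Import structures.
From mathcomp Require Import all_boot all_order all_algebra.
Set Implicit Arguments. Unset Strict Implicit. Unset Printing Implicit Defensive.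
Import Order.TTheory GRing.Theory Num.Theory.
Local Open Scope ring_scope.

(* The Heisenberg Lie algebra h_m over F, realised on row vectors of length
   2m+1 = (m+m)+1; coordinate vector x stands for sum_i x_i e_i.
   Index conventions: e_j (1<=j<=m) is hidx1 j, e_{m+j} is hidx2 j,
   e_{2m+1} is hlast. *)
Definition hidx1 (m : nat) (j : 'I_m) : 'I_(m + m + 1) := lshift 1 (lshift m j).
Definition hidx2 (m : nat) (j : 'I_m) : 'I_(m + m + 1) := lshift 1 (rshift m j).
Definition hlast (m : nat) : 'I_(m + m + 1) := rshift (m + m) ord0.

Definition hbasis (F : fieldType) (m : nat) (i : 'I_(m + m + 1)) : 'rV[F]_(m + m + 1) :=
  delta_mx ord0 i.

Definition heis_bracket (F : fieldType) (m : nat) (x y : 'rV[F]_(m + m + 1))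
  : 'rV[F]_(m + m + 1) :=
  (\sum_(j < m) (x ord0 (hidx1 j) * y ord0 (hidx2 j)
                 - x ord0 (hidx2 j) * y ord0 (hidx1 j))) *: hbasis F (hlast m).

Definition heis_p2 (F : fieldType) (m : nat) (lam : 'rV[F]_(m + m + 1))
  (x : 'rV[F]_(m + m + 1)) : 'rV[F]_(m + m + 1) :=
  (\sum_(i < m + m + 1) x ord0 i ^+ 2 * lam ord0 i
   + \sum_(j < m) x ord0 (hidx1 j) * x ord0 (hidx2 j)) *: hbasis F (hlast m).

Definition restricted_iso (F : fieldType) (m : nat) (lam lam' : 'rV[F]_(m + m + 1))
  (f : 'rV[F]_(m + m + 1) -> 'rV[F]_(m + m + 1)) : Prop :=
  [/\ (forall (c : F) (x y : 'rV[F]_(m + m + 1)), f (c *: x + y) = c *: f x + f y),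
      bijective f,
      (forall x y, f (heis_bracket x y) = heis_bracket (f x) (f y)) &
      (forall x, f (heis_p2 lam x) = heis_p2 lam' (f x))].

Definition restricted_isomorphic (F : fieldType) (m : nat) (lam lam' : 'rV[F]_(m + m + 1))
  : Prop := exists f, restricted_iso lam lam' f.

Definition Jm (F : fieldType) (m : nat) : 'M[F]_(m + m) :=
  block_mx 0 1%:M (- 1%:M) 0.

Definition lam_head (F : fieldType) (m : nat) (lam : 'rV[F]_(m + m + 1)) : 'rV[F]_(m + m) :=
  \row_(i < m + m) lam ord0 (lshift 1 i).

(* Main.v *)
Require Import Defs.
From HB Require Import structures.
From mathcomp Require Import all_boot all_order all_algebra.
From mathcomp Require Import ring.
Import Order.TTheory GRing.Theory Num.Theory.
Set Implicit Arguments. Unset Strict Implicit. Unset Printing Implicit Defensive.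
Local Open Scope ring_scope.

Definition omega (F : fieldType) (m : nat) (a b : 'rV[F]_(m + m)) : F :=
  (a *m Jm F m *m b^T) 0 0.

Lemma hbasisE (F : fieldType) (m : nat) :
  hbasis F (hlast m) = row_mx 0 (1%:M : 'M[F]_1).
Proof.
rewrite /hbasis /hlast delta_mx_rshift; congr row_mx.
by apply/matrixP => i j; rewrite !ord1 !mxE.
Qed.

Lemma bracketE (F : fieldType) (m : nat) (a b : 'rV[F]_(m + m)) (c d : 'rV[F]_1) :
  heis_bracket (row_mx a c) (row_mx b d) = omega a b *: hbasis F (hlast m).
Proof.
rewrite /heis_bracket /omega; congr (_ *: _).
rewrite -[a]hsubmxK -[b]hsubmxK.
move: (lsubmx a) (rsubmx a) (lsubmx b) (rsubmx b) => a1 a2 b1 b2.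
rewrite /Jm mul_row_block !mulmx0 !mulmx1 mulmxN mulmx1 add0r addr0.
rewrite tr_row_mx mul_row_col !mxE /hidx1 /hidx2.
rewrite sumrB addrC; congr (_ + _).
  by apply: eq_bigr => j _; rewrite ?row_mxEl ?row_mxEr ?row_mxEl ?mxE.
rewrite -sumrN; apply: eq_bigr => j _; rewrite ?row_mxEl ?row_mxEr ?row_mxEl ?mxE mulNr.
done.
Qed.

Definition Qf (F : fieldType) (m : nat) (l : 'rV[F]_(m + m + 1)) (a : 'rV[F]_(m + m)) : F :=
  (a *m diag_mx (lam_head l) *m a^T) 0 0 + (lsubmx a *m (rsubmx a)^T) 0 0.

Lemma p2E (F : fieldType) (m : nat) (l : 'rV[F]_(m + m + 1)) (a : 'rV[F]_(m + m)) (c : 'rV[F]_1) :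
  heis_p2 l (row_mx a c) = (Qf l a + l 0 (hlast m) * (c 0 0) ^+ 2) *: hbasis F (hlast m).
Proof.
rewrite /heis_p2 /Qf; congr (_ *: _).
rewrite big_split_ord /= big_ord1 [LHS]addrAC; congr (_ + _ + _).
- rewrite [RHS]mxE; apply: eq_bigr => i _.
  by rewrite row_mxEl mul_mx_diag !mxE; ring.
- rewrite [RHS]mxE; apply: eq_bigr => j _; rewrite /hidx1 /hidx2 !row_mxEl !mxE //.
- by rewrite /hlast row_mxEr mulrC.
Qed.

Definition Mb (F : fieldType) (m : nat) (A : 'M[F]_(m + m)) (k : 'rV[F]_(m + m)) (mu : F)
  : 'M[F]_(m + m + 1) := block_mx A k^T 0 mu%:M.

Lemma mulMb (F : fieldType) (m : nat) (A : 'M[F]_(m + m)) k mu a (c : 'rV[F]_1) :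
  row_mx a c *m Mb A k mu = row_mx (a *m A) (a *m k^T + c *m mu%:M).
Proof. by rewrite /Mb mul_row_block mulmx0 addr0. Qed.

Lemma EMb (F : fieldType) (m : nat) (A : 'M[F]_(m + m)) k mu :
  hbasis F (hlast m) *m Mb A k mu = mu *: hbasis F (hlast m).
Proof.
by rewrite hbasisE mulMb !mul0mx add0r mul1mx scale_row_mx scaler0 scalemx1.
Qed.

Lemma scaleE_inj (F : fieldType) (m : nat) (s t : F) :
  s *: hbasis F (hlast m) = t *: hbasis F (hlast m) -> s = t.
Proof.
move/(congr1 (fun v : 'rV[F]_(m + m + 1) => v 0 (hlast m))); rewrite !mxE !eqxx /= !mulr1n.
by rewrite !mulr1.
Qed.

Lemma deltaQ (F : fieldType) n (X : 'M[F]_n) i j :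
  ((delta_mx 0 i : 'rV[F]_n) *m X *m (delta_mx 0 j : 'rV[F]_n)^T) 0 0 = X i j.
Proof. by rewrite -rowE trmx_delta -colE !mxE. Qed.

Lemma omegaA (F : fieldType) (m : nat) (A : 'M[F]_(m + m)) a b :
  omega (a *m A) (b *m A) = (a *m (A *m Jm F m *m A^T) *m b^T) 0 0.
Proof. by rewrite /omega trmx_mul !mulmxA. Qed.

Lemma brk_core1 (F : fieldType) (m : nat) (A : 'M[F]_(m + m)) k mu a b (c d : 'rV[F]_1) :
  heis_bracket (row_mx a c) (row_mx b d) *m Mb A k mu = (omega a b * mu) *: hbasis F (hlast m).
Proof. by rewrite bracketE -scalemxAl EMb scalerA. Qed.

Lemma brk_core2 (F : fieldType) (m : nat) (A : 'M[F]_(m + m)) k mu a b (c d : 'rV[F]_1) :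
  heis_bracket (row_mx a c *m Mb A k mu) (row_mx b d *m Mb A k mu)
  = omega (a *m A) (b *m A) *: hbasis F (hlast m).
Proof. by rewrite !mulMb bracketE. Qed.

Lemma p2_core1 (F : fieldType) (m : nat) l (A : 'M[F]_(m + m)) k mu a (c : 'rV[F]_1) :
  heis_p2 l (row_mx a c) *m Mb A k mu
  = ((Qf l a + l 0 (hlast m) * (c 0 0) ^+ 2) * mu) *: hbasis F (hlast m).
Proof. by rewrite p2E -scalemxAl EMb scalerA. Qed.

Lemma p2_core2 (F : fieldType) (m : nat) l (A : 'M[F]_(m + m)) k mu a (c : 'rV[F]_1) :
  heis_p2 l (row_mx a c *m Mb A k mu)
  = (Qf l (a *m A) + l 0 (hlast m) * ((a *m k^T) 0 0 + c 0 0 * mu) ^+ 2)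
     *: hbasis F (hlast m).
Proof.
rewrite mulMb p2E mul_mx_scalar; congr (_ *: _); congr (_ + _); congr (_ * _).
by rewrite !mxE [mu * _]mulrC.
Qed.

Lemma lsub0 (F : fieldType) (m : nat) : lsubmx (0 : 'rV[F]_(m + m)) = 0.
Proof. by apply/matrixP => i j; rewrite !mxE. Qed.

Lemma Qf0 (F : fieldType) (m : nat) l : Qf l (0 : 'rV[F]_(m + m)) = 0.
Proof. by rewrite /Qf !mul0mx lsub0 !mul0mx !mxE addr0. Qed.

Lemma lin_sum (F : fieldType) n (f : 'rV[F]_n -> 'rV[F]_n)
  (lin : forall (c : F) x y, f (c *: x + y) = c *: f x + f y) (I : finType)
  (c : I -> F) (v : I -> 'rV[F]_n) :
  f (\sum_i c i *: v i) = \sum_i c i *: f (v i).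
Proof.
have f0 : f 0 = 0.
  have h := lin 1 0 0; rewrite !scale1r addr0 in h.
  have := congr1 (fun z => z - f 0) h.
  by rewrite subrr addrK => <-.
apply: (big_rec2 (fun x y => f x = y)) => // i y1 y2 _ <-.
by rewrite lin.
Qed.

Lemma Jm_unit (F : fieldType) (m : nat) : Jm F m \in unitmx.
Proof.
suff JJ : Jm F m *m (- Jm F m) = 1%:M by case: (mulmx1_unit JJ).
rewrite mulmxN /Jm mulmx_block !mulmx0 !mul0mx !mulmx1 !mul1mx !addr0 !add0r.
rewrite opp_block_mx !oppr0 opprK.
by rewrite [RHS](scalar_mx_block m m).
Qed.

Lemma fwd_alg (F : fieldType) (t1 t2 t1' t2' L L' c k nu : F) : c = 0 ->
  (t1 + t2 + L * c ^+ 2) * nu = t1' + t2' + L' * (k + c * nu) ^+ 2 ->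
  nu * t1 + nu * t2 = t1' + t2' + L' * k ^+ 2.
Proof.
move=> -> h.
have e1 : nu * t1 + nu * t2 = (t1 + t2 + L * 0 ^+ 2) * nu by ring.
have e2 : t1' + t2' + L' * k ^+ 2 = t1' + t2' + L' * (k + 0 * nu) ^+ 2 by ring.
by rewrite e1 e2.
Qed.

Lemma fwd_alg2 (F : fieldType) (q q' L L' c k nu : F) : q = 0 -> q' = 0 -> c = 1 ->
  k = 0 -> nu != 0 ->
  (q + L * c ^+ 2) * nu = q' + L' * (k + c * nu) ^+ 2 -> L = nu * L'.
Proof.
move=> -> -> -> -> nu0 h; apply: (mulIf nu0).
have e : L * nu = (0 + L * 1 ^+ 2) * nu by ring.
rewrite e h; ring.
Qed.

Lemma bwd_alg (F : fieldType) (t1 t2 t1' t2' L L' c k mu : F) : 2%:R = 0 :> F ->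
  mu * t1 + mu * t2 = t1' + t2' + L' * k ^+ 2 -> L = mu * L' ->
  (t1 + t2 + L * c ^+ 2) * mu = t1' + t2' + L' * (k + c * mu) ^+ 2.
Proof.
move=> two h ->.
have e : (k + c * mu) ^+ 2 = k ^+ 2 + (c * mu) ^+ 2 + 2%:R * (k * c * mu) by ring.
rewrite e two.
have e2 : t1' = mu * t1 + mu * t2 - L' * k ^+ 2 - t2' by rewrite h; ring.
rewrite e2; ring.
Qed.

Unset Implicit Arguments.
Unset Strict Implicit.

Theorem theorem3p2 (F : fieldType) (m : nat) (lam lam' : 'rV[F]_(m + m + 1)) :
  (2%N \in [pchar F]) -> (0 < m)%N ->
  restricted_isomorphic lam lam' <->
  exists (A : 'M[F]_(m + m)) (k : 'rV[F]_(m + m)) (mu : F),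
    [/\ A \in unitmx,
        (\det A) ^+ 2 = mu ^+ (m + m),
        A *m Jm F m *m A^T = mu *: Jm F m,
        (forall a : 'rV[F]_(m + m),
            mu * (a *m diag_mx (lam_head lam) *m a^T) ord0 ord0
            + mu * (lsubmx a *m (rsubmx a)^T) ord0 ord0
          = ((a *m A) *m diag_mx (lam_head lam') *m (a *m A)^T) ord0 ord0
            + (lsubmx (a *m A) *m (rsubmx (a *m A))^T) ord0 ord0
            + lam' ord0 (hlast m) * ((a *m k^T) ord0 ord0) ^+ 2) &
        lam ord0 (hlast m) = mu * lam' ord0 (hlast m)].
Proof.
move=> ch2 m0.
have two : 2%:R = 0 :> F by apply: pcharf0.
split.
- case=> f [lin bij brk p2].
  set E := hbasis F (hlast m).
  have lsum := lin_sum lin.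
  pose M : 'M[F]_(m + m + 1) := \matrix_i f (delta_mx 0 i).
  have fM : forall x, f x = x *m M.
    move=> x; rewrite mulmx_sum_row {1}[x]row_sum_delta lsum.
    by apply: eq_bigr => i _; rewrite rowK.
  have [nu fE] : exists nu, f E = nu *: E.
    pose j0 : 'I_m := Ordinal m0.
    have hE : E = heis_bracket (row_mx (delta_mx 0 (lshift m j0)) (0 : 'rV[F]_1))
                               (row_mx (delta_mx 0 (rshift m j0)) (0 : 'rV[F]_1)).
      by rewrite bracketE /omega deltaQ /Jm block_mxEur mxE eqxx mulr1n scale1r.
    rewrite {1}hE brk; set u := f _; set w := f _.
    rewrite -[u]hsubmxK -[w]hsubmxK bracketE.
    eexists; reflexivity.
  have EM : E *m M = nu *: E by rewrite -fM.
  move: EM; rewrite -[M]submxK /E hbasisE mul_row_block !mul0mx !add0r !mul1mx.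
  rewrite scale_row_mx scaler0 scalemx1.
  case/eq_row_mx => Hdl Hdr.
  set A := ulsubmx M; set k := (ursubmx M)^T.
  have fMb : forall x, f x = x *m Mb A k nu.
    move=> x; rewrite fM; congr (_ *m _).
    by rewrite /Mb trmxK -Hdl -Hdr submxK.
  have nu0 : nu != 0.
    apply/eqP => nu0.
    have : f E = f 0 by rewrite fE nu0 scale0r fM mul0mx.
    move/(bij_inj bij) => E0.
    have := @scaleE_inj F m 1 0; rewrite -/E E0 !scaler0 => /(_ erefl) /eqP.
    by rewrite oner_eq0.
  have AJ : A *m Jm F m *m A^T = nu *: Jm F m.
    apply/matrixP => i j.
    have := brk (row_mx (delta_mx 0 i) (0 : 'rV[F]_1)) (row_mx (delta_mx 0 j) (0 : 'rV[F]_1)).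
    rewrite !fMb brk_core1 brk_core2 => /scaleE_inj.
    rewrite omegaA /omega !deltaQ => h.
    by rewrite [RHS]mxE -h mulrC.
  have Junit := Jm_unit F m.
  have detJ : \det (Jm F m) != 0 by rewrite -unitfE -unitmxE.
  have detA : \det A ^+ 2 = nu ^+ (m + m).
    apply: (mulIf detJ).
    have := congr1 determinant AJ; rewrite !det_mulmx det_tr detZ => h.
    by rewrite -h; ring.
  exists A, k, nu; split => //.
  + rewrite unitmxE unitfE; apply/eqP => dA.
    move: detA; rewrite dA expr2 mulr0 => /esym/eqP.
    by rewrite expf_eq0 (negbTE nu0) andbF.
  + move=> a; have := p2 (row_mx a (0 : 'rV[F]_1)).
    rewrite !fMb p2_core1 p2_core2 => /scaleE_inj h.
    by apply: (fwd_alg _ h); rewrite mxE.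
  + have := p2 (row_mx 0 (1%:M : 'rV[F]_1)).
    rewrite !fMb p2_core1 p2_core2 => /scaleE_inj h.
    apply: (fwd_alg2 _ _ _ _ nu0 h).
    * exact: Qf0.
    * by rewrite mul0mx Qf0.
    * by rewrite mxE eqxx mulr1n.
    * by rewrite mul0mx mxE.
- case=> A [k [mu [Au dA AJ H2 H3]]].
  have mu0 : mu != 0.
    apply/eqP => mu0; move: Au; rewrite unitmxE unitfE; move: dA.
    rewrite mu0 expr0n addn_eq0 -[(m == 0)%N]negbK -lt0n m0 /= mulr0n.
    by move=> /eqP; rewrite expf_eq0 /= => /eqP ->; rewrite eqxx.
  pose f := fun x : 'rV[F]_(m + m + 1) => x *m Mb A k mu.
  exists f; split.
  + by move=> c x y; rewrite /f mulmxDl scalemxAl.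
  + have Mu : Mb A k mu \in unitmx.
      rewrite unitmxE /Mb det_ublock det_scalar unitfE mulf_neq0 //.
        by rewrite -unitfE -unitmxE.
    by exists (fun y => y *m invmx (Mb A k mu)) => x; rewrite /f ?mulmxK ?mulmxKV.
  + move=> x y; rewrite /f -[x]hsubmxK -[y]hsubmxK brk_core1 brk_core2 omegaA AJ.
    congr (_ *: _).
    by rewrite -scalemxAr -scalemxAl [RHS]mxE /omega mulrC.
  + move=> x; rewrite /f -[x]hsubmxK p2_core1 p2_core2; congr (_ *: _).
    by apply: bwd_alg => //; apply: H2.
Qed.
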